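(* Let $m\ge2$ and $0<p_1,\dots,p_m,p<\infty$ with $\frac1{p_1}+\dots+\frac1{p_m}=\frac1p$. There is a function $c:[0,\infty)\to[0,\infty)$ depending only on $m,p_1,\dots,p_m$ with $c(\varepsilon)\to0$ as $\varepsilon\to0$ such that the following holds. Let $(X,\mathcal{X},\mu)$ be a measure space, let $f_i\in L^{p_i}(X)$ with $\|f_i\|_{L^{p_i}(X)}>0$ for $i=1,\dots,m$, and suppose that for some $\varepsilon>0$, $$\|f_1\cdots f_m\|_{L^p(X)} \ge (1-\varepsilon)\|f_1\|_{L^{p_1}(X)}\cdots\|f_m\|_{L^{p_m}(X)}.$$ Then there is a measurable set $E\subset X$ with $\int_E|f_i|^{p_i}\,d\mu \le c(\varepsilon)\|f_i\|_{L^{p_i}(X)}^{p_i}$ for all $i$, and there are positive reals $c_1,\dots,c_m$ such that for all $x\in X\setminus E$ and all $i$, $$c_i|f_i(x)|^{p_i} = (1+\delta_i(x))|f_1\cdots f_m(x)|^p \quad\text{with } |\delta_i(x)|\le c(\varepsilon).$$ In particular $c_i|f_i(x)|^{p_i} = (1+\delta_{ij}(x))c_j|f_j(x)|^{p_j}$ with $|\delta_{ij}(x)|\le c(\varepsilon)$ for all $x\in X\setminus E$ and all $i,j$. *)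

(* Defs.v *)
From mathcomp Require Import all_boot all_order all_algebra.
From mathcomp Require Import all_classical all_reals all_analysis.
Set Implicit Arguments. Unset Strict Implicit. Unset Printing Implicit Defensive.

(* Main.v *)
Require Import Defs.
From mathcomp Require Import all_boot all_order all_algebra.
From mathcomp Require Import all_classical all_reals all_analysis.
From mathcomp Require Import ring lra.
Import Order.TTheory GRing.Theory Num.Theory.
Import numFieldNormedType.Exports.
Local Open Scope classical_set_scope.
Local Open Scope ring_scope.

From mathcomp Require Import measurable_realfun.
Section Ineqs.
Variable R : realType.
Implicit Types x y t a b : R.

Lemma amgm2 x y t : 0 <= x -> 0 <= y -> 0 <= t <= 1 ->
  x `^ t * y `^ (1 - t) <= t * x + (1 - t) * y.
Proof.
move=> x0 y0 /andP[t0 t1].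
have [->|tn0] := eqVneq t 0.
  by rewrite powRr0 !subr0 powRr1 //; lra.
have [->|tn1] := eqVneq t 1.
  by rewrite powRr1 // subrr powRr0; lra.
have tp : 0 < t by rewrite lt_neqAle eq_sym tn0.
have t1' : t < 1 by rewrite lt_neqAle tn1.
have ut : 0 < 1 - t by rewrite subr_gt0.
have ip : 0 < t^-1 by rewrite invr_gt0.
have iq : 0 < (1 - t)^-1 by rewrite invr_gt0.
have := conjugate_powR (powR_ge0 x t) (powR_ge0 y (1 - t)) ip iq.
rewrite !invrK -!powRrM !mulfV ?gt_eqF // !powRr1 //.
rewrite [x * t]mulrC [y * _]mulrC; apply.
by rewrite subrKC.
Qed.

Lemma amgm2h x y a b : 0 <= x -> 0 <= y -> 0 < a -> 0 < b ->
  x `^ a * y `^ b <= ((a * x + b * y) / (a + b)) `^ (a + b).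
Proof.
move=> x0 y0 a0 b0.
have ab0 : 0 < a + b by rewrite addr_gt0.
set t := a / (a + b).
have t01 : 0 <= t <= 1.
  apply/andP; split; first by rewrite divr_ge0 ?ltW.
  by rewrite ler_pdivrMr // mul1r lerDl ltW.
have h := @amgm2 x y t x0 y0 t01.
have e1 : 1 - t = b / (a + b) by rewrite /t; field; rewrite gt_eqF.
have -> : (a * x + b * y) / (a + b) = t * x + (1 - t) * y.
  by rewrite e1 /t; field; rewrite gt_eqF.
apply: le_trans (ge0_ler_powR (ltW ab0) _ _ h); last 2 first.
- by rewrite nnegrE mulr_ge0 ?powR_ge0.
- by rewrite nnegrE addr_ge0 // mulr_ge0 // ?e1 ?divr_ge0 ?ltW //; case/andP: t01.
rewrite powRM ?powR_ge0 // -!powRrM e1 /t.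
by rewrite !divfK ?gt_eqF.
Qed.

Lemma amgm_seq (I : Type) (r : seq I) (w g : I -> R) :
  (forall i, 0 < w i) -> (forall i, 0 <= g i) ->
  \prod_(i <- r) g i `^ w i <=
  ((\sum_(i <- r) w i * g i) / \sum_(i <- r) w i) `^ (\sum_(i <- r) w i).
Proof.
move=> w0 g0; elim: r => [|i r IH]; first by rewrite !big_nil powRr0.
case: r IH => [|k r'] IH.
  by rewrite !big_cons !big_nil !addr0 mulr1 [w i * g i]mulrC mulfK ?gt_eqF.
have : k :: r' <> [::] by [].
move: (k :: r') IH => r IH rn.
rewrite !big_cons.
have W0 : 0 < \sum_(j <- r) w j.
  case: r rn {IH} => // k0 r0 _; rewrite big_cons.
  apply: (@lt_le_trans _ _ (w k0)) => //; rewrite lerDl.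
  by apply: sumr_ge0 => j _; apply: ltW.
apply: le_trans (ler_wpM2l (powR_ge0 _ _) IH) _.
have S0 : 0 <= (\sum_(j <- r) w j * g j) / \sum_(j <- r) w j.
  apply: divr_ge0; last exact: ltW.
  by apply: sumr_ge0 => j _; apply: mulr_ge0; [exact: ltW | exact: g0].
have := @amgm2h _ _ _ _ (g0 i) S0 (w0 i) W0.
by rewrite (mulrC (\sum_(j <- r) w j) (_ / _)) divfK ?gt_eqF.
Qed.


Lemma kober_half a b t : 0 <= a -> 0 <= b -> 0 < t -> t <= 2^-1 ->
  t * (Num.sqrt a - Num.sqrt b) ^+ 2 <=
  t * a + (1 - t) * b - a `^ t * b `^ (1 - t).
Proof.
move=> a0 b0 t0 th.
set u := Num.sqrt a; set v := Num.sqrt b.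
have u0 : 0 <= u by apply: sqrtr_ge0.
have v0 : 0 <= v by apply: sqrtr_ge0.
have au : a = u ^+ 2 by rewrite sqr_sqrtr.
have bv : b = v ^+ 2 by rewrite sqr_sqrtr.
have s01 : 0 <= 2 * t <= 1.
  apply/andP; split; first by rewrite mulr_ge0 // ltW.
  by rewrite -ler_pdivlMl // mulr1.
have := @amgm2 (u * v) b (2 * t) (mulr_ge0 u0 v0) b0 s01.
have -> : (u * v) `^ (2 * t) = a `^ t * b `^ t.
  rewrite powRM // powRrM powR_mulrn // [v `^ _]powRrM powR_mulrn //.
  by rewrite -au -bv.
rewrite -mulrA.
have -> : b `^ t * b `^ (1 - 2 * t) = b `^ (1 - t).
  rewrite -powRD; first by congr (_ `^ _); ring.
  apply/implyP => /eqP h; exfalso.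
  have : t + (1 - 2 * t) = 1 - t by ring.
  by rewrite h => /eqP; rewrite eq_sym subr_eq0 => /eqP ht; move: th; rewrite -ht; lra.
move=> h.
have e : t * a + (1 - t) * b - a `^ t * b `^ (1 - t) >=
  t * a + (1 - t) * b - (2 * t * (u * v) + (1 - 2 * t) * b).
  by rewrite lerD2l lerN2.
apply: le_trans e; rewrite au bv le_eqVlt; apply/orP; left; apply/eqP; ring.
Qed.

Lemma kober a b t : 0 <= a -> 0 <= b -> 0 < t < 1 ->
  (Num.sqrt a - Num.sqrt b) ^+ 2 <=
  (t^-1 + (1 - t)^-1) * (t * a + (1 - t) * b - a `^ t * b `^ (1 - t)).
Proof.
move=> a0 b0 /andP[t0 t1].
have s0 : 0 < 1 - t by rewrite subr_gt0.
set D := t * a + (1 - t) * b - _.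
have fin : forall s, (s = t \/ s = 1 - t) -> 0 < s -> s * (Num.sqrt a - Num.sqrt b) ^+ 2 <= D ->
    (Num.sqrt a - Num.sqrt b) ^+ 2 <= (t^-1 + (1 - t)^-1) * D.
  move=> s hs sp h.
  have X0 : 0 <= (Num.sqrt a - Num.sqrt b) ^+ 2 by apply: sqr_ge0.
  have D0 : 0 <= D by apply: le_trans h; rewrite mulr_ge0 // ltW.
  apply: (@le_trans _ _ (s^-1 * D)).
    by rewrite -(ler_pM2l sp) [s * (s^-1 * D)]mulrA mulfV ?gt_eqF // mul1r.
  rewrite ler_wpM2r //; case: hs => ->.
    by rewrite lerDl invr_ge0 ltW.
  by rewrite lerDr invr_ge0 ltW.
have [th|th] := lerP t 2^-1.
  by apply: (fin t) => //; [left | apply: kober_half].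
apply: (fin (1 - t)) => //; first by right.
have := @kober_half b a (1 - t) b0 a0 s0 ltac:(lra).
rewrite opprB.
have -> : 1 + (t - 1) = t by ring.
have -> : (Num.sqrt b - Num.sqrt a) ^+ 2 = (Num.sqrt a - Num.sqrt b) ^+ 2.
  by rewrite -sqrrN opprB.
by rewrite (addrC ((1 - t) * b)) (mulrC (b `^ _)).
Qed.


Lemma between_sqrt g A B t : 0 <= g -> 0 <= B -> 0 <= t <= 1 ->
  A = t * g + (1 - t) * B ->
  (Num.sqrt g - Num.sqrt A) ^+ 2 <= (Num.sqrt g - Num.sqrt B) ^+ 2.
Proof.
move=> g0 B0 /andP[t0 t1] ->.
have [gB|Bg] := lerP g B.
  have h1 : g <= t * g + (1 - t) * B by nra.
  have h2 : t * g + (1 - t) * B <= B by nra.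
  have s1 := ler_wsqrtr h1; have s2 := ler_wsqrtr h2.
  have := sqrtr_ge0 g; nra.
have h1 : B <= t * g + (1 - t) * B by nra.
have h2 : t * g + (1 - t) * B <= g by nra.
have s1 := ler_wsqrtr h1; have s2 := ler_wsqrtr h2.
have := sqrtr_ge0 B; nra.
Qed.

Lemma core (m : nat) (th g : 'I_m -> R) :
  (forall i, 0 < th i) -> (forall i, th i < 1) -> \sum_(i < m) th i = 1 ->
  (forall i, 0 <= g i) ->
  \prod_(i < m) g i `^ th i <= \sum_(i < m) th i * g i /\
  forall j, (Num.sqrt (g j) - Num.sqrt (\sum_(i < m) th i * g i)) ^+ 2 <=
     ((th j)^-1 + (1 - th j)^-1) *
     (\sum_(i < m) th i * g i - \prod_(i < m) g i `^ th i).
Proof.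
move=> th0 th1 ths g0.
set A := \sum_(i < m) th i * g i; set G := \prod_(i < m) g i `^ th i.
have A0 : 0 <= A by apply: sumr_ge0 => i _; apply: mulr_ge0; [exact: ltW|exact: g0].
have GA : G <= A.
  have := @amgm_seq _ (index_enum 'I_m) th g th0 g0.
  by rewrite -/A -/G ths divr1 powRr1.
split => // j.
set t := th j.
have t0 : 0 < t := th0 j.
have t1 : t < 1 := th1 j.
set Q := \prod_(i < m | i != j) g i `^ th i.
set S' := \sum_(i < m | i != j) th i * g i.
have GQ : G = g j `^ t * Q by rewrite /G (bigD1 j).
have AS : A = t * g j + S' by rewrite /A (bigD1 j).
have W' : \sum_(i < m | i != j) th i = 1 - t.
  have h := ths; rewrite (bigD1 j) //= in h.
  by rewrite -h /t addrC addrK.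
have QB : Q <= (S' / (1 - t)) `^ (1 - t).
  have := @amgm_seq _ [seq i <- index_enum 'I_m | i != j] th g th0 g0.
  by rewrite !big_filter W'.
set B := S' / (1 - t).
have ut : 0 < 1 - t by rewrite subr_gt0.
have S0 : 0 <= S' by apply: sumr_ge0 => i _; apply: mulr_ge0; [exact: ltW|exact: g0].
have B0 : 0 <= B by rewrite divr_ge0 // ltW.
have AB : A = t * g j + (1 - t) * B by rewrite AS /B [(1 - t) * _]mulrC divfK ?gt_eqF.
have GB : G <= g j `^ t * B `^ (1 - t) by rewrite GQ ler_wpM2l // powR_ge0.
apply: le_trans (@between_sqrt (g j) A B t (g0 j) B0 _ AB) _.
  by rewrite !ltW.
apply: le_trans (@kober (g j) B t (g0 j) B0 _) _; first by rewrite t0 t1.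
rewrite -AB ler_wpM2l //; first by rewrite addr_ge0 // invr_ge0 ltW.
by rewrite lerD2l lerN2.
Qed.


Lemma bounds_sqrt g A x : 0 <= g -> 0 <= A -> 0 <= x -> x <= 1 ->
  (Num.sqrt g - Num.sqrt A) ^+ 2 <= x ^+ 2 * A ->
  (1 - x) ^+ 2 * A <= g /\ g <= (1 + x) ^+ 2 * A.
Proof.
move=> g0 A0 x0 x1 h.
have u0 := sqrtr_ge0 g; have v0 := sqrtr_ge0 A.
have gu := sqr_sqrtr g0; have Av := sqr_sqrtr A0.
have xv : 0 <= x * Num.sqrt A by rewrite mulr_ge0.
have h' : (Num.sqrt g - Num.sqrt A) ^+ 2 <= (x * Num.sqrt A) ^+ 2.
  by rewrite exprMn Av.
have := ler_wsqrtr h'; rewrite !sqrtr_sqr (ger0_norm xv) ler_norml => /andP[h1 h2].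
rewrite -gu -{1 2}Av.
move: u0 v0 h1 h2 xv; set u := Num.sqrt g; set v := Num.sqrt A => u0 v0 h1 h2 xv.
have l1 : 0 <= u - (1 - x) * v by lra.
have l2 : 0 <= u + (1 - x) * v by nra.
have l3 : 0 <= (1 + x) * v - u by lra.
have l4 : 0 <= (1 + x) * v + u by nra.
split; nra.
Qed.

Lemma delta1 gi G A x : 0 <= A -> 0 <= x -> x <= 2^-1 ->
  (1 - x) ^+ 2 * A <= gi -> gi <= (1 + x) ^+ 2 * A ->
  (1 - x ^+ 2) * A <= G -> G <= A ->
  exists delta, `|delta| <= 4 * x /\ gi = (1 + delta) * G.
Proof.
move=> A0 x0 xh h1 h2 h3 h4.
have [G0|Gn0] := eqVneq G 0.
  exists 0; rewrite normr0 mulr_ge0 //= G0 mulr0; split => //.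
  have : A = 0 by rewrite G0 in h3; nra.
  by move=> A00; rewrite A00 mulr0 in h2; rewrite A00 mulr0 in h1; apply/eqP; rewrite eq_le h2 h1.
have Gp : 0 < G by rewrite lt_neqAle eq_sym Gn0 /=; nra.
exists (gi / G - 1); split; last by rewrite addrC subrK divfK.
have e : gi / G - 1 = (gi - G) / G by field.
rewrite e normrM normfV (gtr0_norm Gp) ler_pdivrMr //.
have u1 : gi - G <= 4 * x * G by nra.
have u2 : G - gi <= 4 * x * G by nra.
by rewrite ler_norml; apply/andP; split; lra.
Qed.

Lemma delta2 gi gj A x : 0 <= A -> 0 <= x -> x <= 2^-1 ->
  (1 - x) ^+ 2 * A <= gi -> gi <= (1 + x) ^+ 2 * A ->
  (1 - x) ^+ 2 * A <= gj -> gj <= (1 + x) ^+ 2 * A ->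
  exists delta, `|delta| <= 16 * x /\ gi = (1 + delta) * gj.
Proof.
move=> A0 x0 xh h1 h2 h3 h4.
have [G0|Gn0] := eqVneq gj 0.
  exists 0; rewrite normr0 mulr_ge0 //= G0 mulr0; split => //.
  have : A = 0 by rewrite G0 in h3; nra.
  by move=> A00; rewrite A00 mulr0 in h2; rewrite A00 mulr0 in h1; apply/eqP; rewrite eq_le h2 h1.
have Gp : 0 < gj by rewrite lt_neqAle eq_sym Gn0 /=; nra.
exists (gi / gj - 1); split; last by rewrite addrC subrK divfK.
have e : gi / gj - 1 = (gi - gj) / gj by field.
rewrite e normrM normfV (gtr0_norm Gp) ler_pdivrMr //.
have k1 : 0 <= x * (gj - (1 - x) ^+ 2 * A) by rewrite mulr_ge0 // subr_ge0.
have k2 : 0 <= x * A * ((1 - x) ^+ 2 - 4^-1).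
  by rewrite mulr_ge0 ?mulr_ge0 // subr_ge0; nra.
have u1 : gi - gj <= 16 * x * gj by nra.
have u2 : gj - gi <= 16 * x * gj by nra.
by rewrite ler_norml; apply/andP; split; lra.
Qed.

Lemma bern (e P : R) : 0 < e -> e <= 2^-1 -> 0 < P -> 1 - 2 * P * e <= (1 - e) `^ P.
Proof.
move=> e0 eh P0.
have a0 : 0 < 1 - e by lra.
rewrite /powR gt_eqF //.
apply: le_trans (expR_ge1Dx _); rewrite lerD2l.
have : ln ((1 - e)^-1) <= 2 * e.
  have -> : (1 - e)^-1 = 1 + e / (1 - e) by field; rewrite gt_eqF.
  apply: le_trans (le_ln1Dx _) _.
    have : 0 <= e / (1 - e) by rewrite divr_ge0 // ltW.
    lra.
  rewrite ler_pdivrMr //; nra.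
rewrite lnV ?posrE //.
nra.
Qed.

End Ineqs.

Lemma powR_div (R : realType) (a r p : R) : 0 <= a -> 0 < r ->
  (a / r) `^ p = (r `^ p)^-1 * a `^ p.
Proof.
move=> a0 r0; rewrite powRM // ?invr_ge0 ?ltW // mulrC; congr (_ * _).
by rewrite -powR_inv1 ?ltW // -powRrM mulN1r powRN.
Qed.

Lemma powR_prod (R : realType) (I : Type) (s : seq I) (F : I -> R) t :
  (forall i, 0 <= F i) -> (\prod_(i <- s) F i) `^ t = \prod_(i <- s) F i `^ t.
Proof.
move=> F0; elim: s => [|i s IH]; first by rewrite !big_nil powR1.
rewrite !big_cons powRM ?IH //; apply: prodr_ge0 => j _; exact: F0.
Qed.

Section Meas.
Context (R : realType) (d : measure_display) (T : measurableType d)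
  (mu : {measure set T -> \bar R}).
Local Open Scope ereal_scope.

Lemma Lnorm_real (f : T -> R) (p : R) : (0 < p)%R ->
  ('N[mu]_(p%:E)[EFin \o f] < +oo) -> (0 < 'N[mu]_(p%:E)[EFin \o f]) ->
  (0 < fine 'N[mu]_(p%:E)[EFin \o f])%R /\
  'N[mu]_(p%:E)[EFin \o f] = (fine 'N[mu]_(p%:E)[EFin \o f])%:E /\
  \int[mu]_x (`|f x| `^ p)%:E = ((fine 'N[mu]_(p%:E)[EFin \o f]) `^ p)%:E.
Proof.
move=> p0 Nfin Npos.
have fN : 'N[mu]_(p%:E)[EFin \o f] \is a fin_num by rewrite gt0_fin_numE.
split; first by rewrite fine_gt0 // Npos Nfin.
split; first by rewrite fineK.
rewrite -poweR_EFin fineK // poweR_Lnorm ?gt_eqF //.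
Qed.

Lemma int_scale (D : set T) (h : T -> R) (k : R) : measurable D ->
  measurable_fun setT h -> (forall x, (0 <= h x)%R) -> (0 <= k)%R ->
  \int[mu]_(x in D) (k * h x)%:E = k%:E * \int[mu]_(x in D) (h x)%:E.
Proof.
move=> mD mh h0 k0.
under eq_integral do rewrite EFinM.
apply: ge0_integralZl => //.
- apply/measurable_EFinP; exact: (measurable_funS measurableT).
- by move=> x _; rewrite lee_fin.
Qed.
End Meas.

Theorem lemma5p1 (R : realType) (m : nat) (hm : (2 <= m)%N)
  (p : 'I_m -> R) (P : R) (hp : forall i, 0 < p i) (hP : 0 < P)
  (hsum : \sum_(i < m) (p i)^-1 = P^-1) :
  exists c : R -> R,
    (forall e, 0 <= e -> 0 <= c e) /\
    (c @ 0^'+ --> 0) /\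
    forall (d : measure_display) (T : measurableType d)
      (mu : {measure set T -> \bar R}) (f : 'I_m -> T -> R) (eps : R),
      (forall i, measurable_fun setT (f i)) ->
      (forall i, ('N[mu]_((p i)%:E)[EFin \o f i] < +oo)%E) ->
      (forall i, (0 < 'N[mu]_((p i)%:E)[EFin \o f i])%E) ->
      0 < eps ->
      ('N[mu]_(P%:E)[(fun x => (\prod_(i < m) f i x)%:E)] >=
         (1 - eps)%:E * \prod_(i < m) 'N[mu]_((p i)%:E)[EFin \o f i])%E ->
      exists E : set T, measurable E /\
        (forall i, (\int[mu]_(x in E) (`|f i x| `^ p i)%:E <=
                    (c eps)%:E * ('N[mu]_((p i)%:E)[EFin \o f i]) `^ (p i))%E) /\
        exists cs : 'I_m -> R, (forall i, 0 < cs i) /\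
          (forall x, ~ E x -> forall i, exists delta : R,
              `|delta| <= c eps /\
              cs i * `|f i x| `^ p i =
                (1 + delta) * `|\prod_(j < m) f j x| `^ P) /\
          (forall x, ~ E x -> forall i j, exists delta : R,
              `|delta| <= c eps /\
              cs i * `|f i x| `^ p i =
                (1 + delta) * (cs j * `|f j x| `^ p j)).
Proof.
pose th := fun i => P / p i.
have th0 : forall i, 0 < th i by move=> i; rewrite divr_gt0.
have ths : \sum_(i < m) th i = 1 by rewrite /th -mulr_sumr hsum divff ?gt_eqF.
have m0 : (0 < m)%N by apply: leq_trans hm.
have th1 : forall i, th i < 1.
  move=> i.
  have [k ki] : exists k : 'I_m, k != i.
    have [hi|hi] := eqVneq (val i) 0%N.
      by exists (Ordinal hm); apply/eqP => /(congr1 val) /=; rewrite hi.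
    by exists (Ordinal m0); apply/eqP => /(congr1 val) /= h; move: hi => /=; rewrite -h.
  rewrite -ths (bigD1 i) //= ltrDl (bigD1 k) //=.
  apply: (@lt_le_trans _ _ (th k)) => //; rewrite lerDl.
  by apply: sumr_ge0 => j _; apply: ltW.
pose lam := \sum_(j < m) ((th j)^-1 + (1 - th j)^-1).
have lamt0 : forall j, 0 <= (th j)^-1 + (1 - th j)^-1.
  move=> j; rewrite addr_ge0 // invr_ge0 ?ltW //.
  by rewrite subr_gt0.
have lamj : forall j, (th j)^-1 + (1 - th j)^-1 <= lam.
  move=> j; rewrite /lam (bigD1 j) //= lerDl.
  by apply: sumr_ge0 => i _.
have lam1 : 1 <= lam.
  apply: le_trans (lamj (Ordinal m0)); apply: le_trans (_ : (th (Ordinal m0))^-1 <= _).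
    by rewrite invf_ge1 // ltW.
  rewrite lerDl invr_ge0 subr_ge0 ltW //.
have psum0 : 0 <= \sum_(i < m) p i by apply: sumr_ge0 => i _; apply: ltW.
pose K := 16 * lam + 2 * \sum_(i < m) p i.
have K16 : 16 * lam <= K by rewrite /K lerDl mulr_ge0.
have K0 : 0 <= K by apply: le_trans K16; rewrite mulr_ge0 //; apply: le_trans lam1.
exists (fun e => K * e `^ 4^-1).
split; first by move=> e _; rewrite mulr_ge0 // powR_ge0.
split.
  rewrite -[X in _ --> X](mulr0 K); apply: cvgMl_tmp; apply: powR_cvg0.
  by rewrite invr_gt0.
move=> d T mu f eps mf Nfin Npos eps0 Hyp.
set q := eps `^ 4^-1.
have q0 : 0 < q by rewrite powR_gt0.
have [big|small] := ltrP (2^-1) (lam * q).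
  have Kq1 : 1 <= K * q.
    apply: le_trans (_ : 16 * lam * q <= _); last by rewrite ler_wpM2r // ltW.
    rewrite -mulrA; lra.
  exists setT; split; first exact: measurableT.
  split.
    move=> i; have [r0 [Nr Ir]] := @Lnorm_real _ _ _ mu (f i) (p i) (hp i) (Nfin i) (Npos i).
    rewrite Nr poweR_EFin -EFinM Ir lee_fin ler_peMl ?powR_ge0 //.
  exists (fun=> 1); split => //; split => x /(_ I) [].
set x0 := lam * q.
have lam0 : 0 <= lam by apply: le_trans lam1.
have x00 : 0 <= x0 by rewrite mulr_ge0 // ltW.
have qx : q <= x0 by rewrite /x0 ler_peMl // ltW.
have q1 : q <= 2^-1 by apply: le_trans small.
have epsq : eps = q ^+ 4.
  rewrite /q -powR_mulrn ?powR_ge0 // -powRrM mulVf ?powRr1 ?ltW //.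
have eps_h : eps <= 2^-1.
  rewrite epsq; have : q ^+ 4 <= q.
    rewrite -[leRHS]expr1; apply: ler_wiXn2l => //; first by rewrite ltW.
    lra.
  lra.
pose r i := fine ('N[mu]_((p i)%:E)[EFin \o f i])%E.
have hr : forall i, 0 < r i /\ ('N[mu]_((p i)%:E)[EFin \o f i])%E = (r i)%:E /\
    (\int[mu]_x (`|f i x| `^ p i)%:E = ((r i) `^ p i)%:E)%E.
  by move=> i; apply: (@Lnorm_real _ _ _ mu (f i) (p i) (hp i) (Nfin i) (Npos i)).
have r0 : forall i, 0 < r i by move=> i; case: (hr i).
pose Rr := \prod_(i < m) r i.
have Rr0 : 0 < Rr by apply: prodr_gt0 => i _.
pose g i x := (`|f i x| / r i) `^ p i.
pose A x := \sum_(i < m) th i * g i x.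
pose G x := (`|\prod_(i < m) f i x| / Rr) `^ P.
have g0 : forall i x, 0 <= g i x by move=> i x; apply: powR_ge0.
have gE : forall i x, g i x = (r i `^ p i)^-1 * `|f i x| `^ p i.
  by move=> i x; rewrite /g powR_div.
have GE2 : forall x, G x = (Rr `^ P)^-1 * `|\prod_(i < m) f i x| `^ P.
  by move=> x; rewrite /G powR_div.
have GE : forall x, G x = \prod_(i < m) g i x `^ th i.
  move=> x; rewrite /G normr_prod /Rr -prodf_div powR_prod; last first.
    by move=> i; rewrite divr_ge0 // ltW.
  apply: eq_bigr => i _; rewrite /g -powRrM /th; congr (_ `^ _).
  by field; rewrite gt_eqF.
have mg : forall i, measurable_fun setT (g i).
  move=> i; apply: (measurableT_comp (measurable_powR _)).
  apply: measurable_funM => //.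
  exact: (measurableT_comp (@measurable_realfun.normr_measurable _ _)).
have mA : measurable_fun setT A.
  apply: measurable_sum => i; apply: measurable_funM => //.
have mG : measurable_fun setT G.
  apply: (measurableT_comp (measurable_powR _)).
  apply: measurable_funM => //.
  apply: (measurableT_comp (@measurable_realfun.normr_measurable _ _)).
  by apply: measurable_prod => i _.
have A0 : forall x, 0 <= A x.
  by move=> x; apply: sumr_ge0 => i _; rewrite mulr_ge0 // ltW.
have G0 : forall x, 0 <= G x by move=> x; apply: powR_ge0.
have cx : forall x, G x <= A x /\ forall j,
    (Num.sqrt (g j x) - Num.sqrt (A x)) ^+ 2 <=
    ((th j)^-1 + (1 - th j)^-1) * (A x - G x).
  by move=> x; rewrite GE; apply: core.
have mfp : forall i, measurable_fun setT (fun x => `|f i x| `^ p i).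
  move=> i; apply: (measurableT_comp (measurable_powR _)).
  exact: (measurableT_comp (@measurable_realfun.normr_measurable _ _)).
have intg : forall i, (\int[mu]_x (g i x)%:E = 1)%E.
  move=> i; under eq_integral do rewrite gE.
  have k0 : 0 <= (r i `^ p i)^-1 by rewrite invr_ge0 powR_ge0.
  rewrite (@int_scale _ _ _ mu setT _ _ measurableT (mfp i) (fun x => powR_ge0 _ _) k0).
  case: (hr i) => _ [_ ->]; rewrite -EFinM mulVf // gt_eqF // powR_gt0 //.
have intA : (\int[mu]_x (A x)%:E = 1)%E.
  rewrite (_ : (fun x => (A x)%:E) = fun x => (\sum_(k < m) (th k * g k x)%:E)%E); last first.
    by apply/funext => x; rewrite sumEFin.
  rewrite ge0_integral_sum //; last 2 first.
  - move=> k; apply/measurable_EFinP; apply: measurable_funM => //.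
  - by move=> k x _; rewrite lee_fin mulr_ge0 // ltW.
  transitivity (\sum_(k < m) (th k)%:E)%E; last by rewrite sumEFin ths.
  apply: eq_bigr => k _.
  rewrite (@int_scale _ _ _ mu setT _ _ measurableT (mg k) (g0 k) (ltW (th0 k))).
  by rewrite intg mule1.
have intG : ((1 - 2 * P * eps)%:E <= \int[mu]_x (G x)%:E)%E.
  have prodN : (\prod_(i < m) 'N[mu]_((p i)%:E)[EFin \o f i] = Rr%:E)%E.
    rewrite /Rr -prodEFin; apply: eq_bigr => i _; by case: (hr i) => _ [-> _].
  rewrite prodN -EFinM in Hyp.
  have e1 : 0 <= 1 - eps by lra.
  have m1 : (((1 - eps) * Rr)%:E \in `[0, +oo])%E.
    by rewrite in_itv /= leey andbT lee_fin mulr_ge0 // ltW.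
  have m2 : ('N[mu]_(P%:E)[(fun x => (\prod_(i < m) f i x)%:E)] \in `[0, +oo])%E.
    by rewrite in_itv /= Lnorm_ge0 leey.
  have H2 := gt0_ler_poweR (ltW hP) m1 m2 Hyp.
  rewrite poweR_EFin poweR_Lnorm ?gt_eqF // in H2.
  have H3 : ((((1 - eps) * Rr) `^ P)%:E <= \int[mu]_x (`|\prod_(i < m) f i x| `^ P)%:E)%E.
    apply: (le_trans H2); rewrite le_eqVlt; apply/orP; left; apply/eqP.
    by apply: eq_integral => x _ /=; rewrite ?abse_EFin ?poweR_EFin.
  under eq_integral do rewrite GE2.
  have mP : measurable_fun setT (fun x => `|\prod_(i < m) f i x| `^ P).
    apply: (measurableT_comp (measurable_powR _)).
    apply: (measurableT_comp (@measurable_realfun.normr_measurable _ _)).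
    by apply: measurable_prod => i _.
  have k0 : 0 <= (Rr `^ P)^-1 by rewrite invr_ge0 powR_ge0.
  rewrite (@int_scale _ _ _ mu setT _ _ measurableT mP (fun x => powR_ge0 _ _) k0).
  apply: le_trans (lee_wpmul2l _ H3); last by rewrite lee_fin invr_ge0 powR_ge0.
  rewrite -EFinM lee_fin (powRM _ e1 (ltW Rr0)) mulrCA mulVf ?gt_eqF ?powR_gt0 // mulr1.
  by apply: bern.
set kap := q ^+ 2.
have kap0 : 0 < kap by rewrite exprn_gt0.
have kapx : kap <= x0 ^+ 2 by rewrite /kap; nra.
pose E := [set x | G x < (1 - kap) * A x].
have mE : measurable E.
  have mb : measurable_fun setT (fun x => G x < (1 - kap) * A x).
    apply: measurable_realfun.measurable_fun_ltr => //.
    exact: measurable_funM.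
  rewrite (_ : E = setT `&` (fun x => G x < (1 - kap) * A x) @^-1` [set true]).
    by apply: mb.
  by apply/seteqP; split => x /=; rewrite /E /= => h //; case: h.
have X0 : (0 <= \int[mu]_(x in E) (A x)%:E)%E.
  by apply: integral_ge0 => x _; rewrite lee_fin.
have mAE : measurable_fun setT (fun x => (A x)%:E) by apply/measurable_EFinP.
have mGE : measurable_fun setT (fun x => (G x)%:E) by apply/measurable_EFinP.
have XA : (\int[mu]_(x in E) (A x)%:E <= 1)%E.
  rewrite -intA; apply: ge0_subset_integral => //.
  by move=> x _; rewrite lee_fin.
have IG0 : (0 <= \int[mu]_x (G x)%:E)%E.
  by apply: integral_ge0 => x _; rewrite lee_fin.
have GA1 : (\int[mu]_x (G x)%:E <= 1)%E.
  rewrite -intA; apply: ge0_le_integral => //.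
  - by move=> x _; rewrite lee_fin.
  - by move=> x _; rewrite lee_fin; case: (cx x).
have H1 : (\int[mu]_x (G x)%:E + kap%:E * \int[mu]_(x in E) (A x)%:E <= 1)%E.
  rewrite -(@int_scale _ _ _ mu E _ _ mE mA A0 (ltW kap0)) [X in (_ + X)%E]integral_mkcond.
  rewrite -ge0_integralD //; last 3 first.
  - by move=> x _; rewrite lee_fin.
  - by move=> x _; rewrite /patch; case: ifPn => _ //; rewrite lee_fin mulr_ge0 // ltW.
  - apply: (measurable_restrictT _ mE).1; apply/measurable_EFinP.
    apply: measurable_funM; first exact: measurable_cst.
    exact: (measurable_funS measurableT).
  rewrite -intA; apply: ge0_le_integral => //.
  - move=> x _; rewrite /patch; case: ifPn => _; rewrite ?adde0 lee_fin ?addr_ge0 //.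
    by rewrite mulr_ge0 // ltW.
  - apply: emeasurable_funD => //.
    apply: (measurable_restrictT _ mE).1; apply/measurable_EFinP.
    apply: measurable_funM; first exact: measurable_cst.
    exact: (measurable_funS measurableT).
  - move=> x _; rewrite /patch; case: ifPn => [|_].
      rewrite inE /E /= => hx; rewrite -EFinD lee_fin; lra.
    by rewrite adde0 lee_fin; case: (cx x).
have XF : (\int[mu]_(x in E) (A x)%:E)%E = (fine (\int[mu]_(x in E) (A x)%:E))%:E.
  rewrite fineK // ge0_fin_numE //; apply: le_lt_trans XA _; exact: ltry.
have GF : (\int[mu]_x (G x)%:E)%E = (fine (\int[mu]_x (G x)%:E))%:E.
  rewrite fineK // ge0_fin_numE //; apply: le_lt_trans GA1 _; exact: ltry.
set X := fine (\int[mu]_(x in E) (A x)%:E) in XF.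
set IG := fine (\int[mu]_x (G x)%:E) in GF.
have X0' : 0 <= X by rewrite -lee_fin -XF.
have IGb : 1 - 2 * P * eps <= IG by rewrite -lee_fin -GF.
have H1' : IG + kap * X <= 1 by rewrite -lee_fin EFinD EFinM -GF -XF.
have Xb : X <= 2 * P * q ^+ 2.
  have h : kap * X <= kap * (2 * P * q ^+ 2).
    have -> : kap * (2 * P * q ^+ 2) = 2 * P * eps by rewrite epsq /kap; ring.
    lra.
  by rewrite ler_pM2l in h.
exists E; split => //; split.
  move=> i; have [ri [Nr Ir]] := hr i.
  rewrite Nr poweR_EFin.
  have pt : forall x, `|f i x| `^ p i <= (r i `^ p i * (p i / P)) * A x.
    move=> x; have h1 : th i * g i x <= A x.
      rewrite /A (bigD1 i) //= lerDl; apply: sumr_ge0 => k _.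
      by rewrite mulr_ge0 // ltW.
    have -> : `|f i x| `^ p i = r i `^ p i * g i x.
      by rewrite gE mulrA mulfV ?mul1r // gt_eqF // powR_gt0.
    rewrite -mulrA ler_wpM2l ?powR_ge0 //.
    apply: le_trans (_ : p i / P * (th i * g i x) <= _); last first.
      by rewrite ler_wpM2l // divr_ge0 // ltW.
    rewrite mulrA /th (_ : p i / P * (P / p i) = 1) ?mul1r //.
    by field; rewrite !gt_eqF.
  have k0 : 0 <= r i `^ p i * (p i / P).
    by rewrite mulr_ge0 ?powR_ge0 // divr_ge0 // ltW.
  apply: le_trans (_ : _ <= \int[mu]_(x in E) ((r i `^ p i * (p i / P)) * A x)%:E)%E _.
    apply: ge0_le_integral => //.
    - apply/measurable_EFinP; exact: (measurable_funS measurableT).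
    - apply/measurable_EFinP; apply: measurable_funM; first exact: measurable_cst.
      exact: (measurable_funS measurableT).
    - by move=> x _ ; rewrite lee_fin.
  rewrite (@int_scale _ _ _ mu E _ _ mE mA A0 k0) XF -EFinM lee_fin.
  have pS : p i <= \sum_(k < m) p k.
    by rewrite (bigD1 i) //= lerDl; apply: sumr_ge0 => k _; apply: ltW.
  have rp0 : 0 < r i `^ p i by rewrite powR_gt0.
  apply: le_trans (_ : r i `^ p i * (p i / P) * (2 * P * q ^+ 2) <= _).
    by rewrite ler_wpM2l.
  have -> : r i `^ p i * (p i / P) * (2 * P * q ^+ 2) = r i `^ p i * (2 * p i * q ^+ 2).
    by field; rewrite gt_eqF.
  rewrite mulrC; apply: ler_wpM2r; first exact: ltW rp0.
  have hK : 2 * \sum_(k < m) p k <= K by rewrite /K lerDr mulr_ge0.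
  have e1 : q ^+ 2 <= q by rewrite expr2 ler_piMl ?ltW //; lra.
  have e2 : 2 * p i * q ^+ 2 <= 2 * p i * q by rewrite ler_wpM2l // mulr_ge0 // ltW.
  have e3 : 2 * p i * q <= K * q by apply: ler_wpM2r; [exact: ltW | lra].
  lra.
have RrP : 0 < Rr `^ P by rewrite powR_gt0.
exists (fun i => Rr `^ P / r i `^ p i).
split; first by move=> i; rewrite divr_gt0 // powR_gt0.
have x01 : x0 <= 1 by apply: le_trans small _; lra.
have key : forall x, ~ E x -> (1 - kap) * A x <= G x /\ forall j,
    (1 - x0) ^+ 2 * A x <= g j x /\ g j x <= (1 + x0) ^+ 2 * A x.
  move=> x nEx; have [GAx hj] := cx x.
  have hG : (1 - kap) * A x <= G x.
    by rewrite leNgt; apply/negP => h; apply: nEx.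
  split => // j.
  apply: bounds_sqrt => //.
  apply: le_trans (hj j) _.
  have d0 : 0 <= A x - G x by rewrite subr_ge0.
  apply: le_trans (_ : lam * (A x - G x) <= _).
    by rewrite ler_wpM2r.
  apply: le_trans (_ : lam * (kap * A x) <= _).
    by rewrite ler_wpM2l //; lra.
  rewrite mulrA; apply: ler_wpM2r => //.
  rewrite /x0 /kap exprMn; apply: ler_wpM2r; first by rewrite exprn_ge0 // ltW.
  by rewrite expr2 ler_peMr.
have id1 : forall i x, (Rr `^ P / r i `^ p i) * `|f i x| `^ p i = Rr `^ P * g i x.
  move=> i x; rewrite gE; field; rewrite gt_eqF // powR_gt0 //.
have id2 : forall x, `|\prod_(j < m) f j x| `^ P = Rr `^ P * G x.
  move=> x; rewrite GE2; field; rewrite gt_eqF //.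
have Kx : 16 * x0 <= K * q by rewrite /x0 mulrA ler_wpM2r // ltW.
split.
  move=> x nEx i; have [hG hb] := key x nEx.
  have [l u] := hb i.
  have [GAx _] := cx x.
  have h3 : (1 - x0 ^+ 2) * A x <= G x.
    apply: le_trans hG; apply: ler_wpM2r => //; lra.
  have [de [hde e]] := @delta1 _ (g i x) (G x) (A x) x0 (A0 x) x00 small l u h3 GAx.
  exists de; split; first lra.
  by rewrite id1 id2 e; ring.
move=> x nEx i j; have [hG hb] := key x nEx.
have [l u] := hb i; have [l' u'] := hb j.
have [de [hde e]] := @delta2 _ (g i x) (g j x) (A x) x0 (A0 x) x00 small l u l' u'.
exists de; split; first lra.
by rewrite !id1 e; ring.
Qed.
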